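(* Assume A1, A2 and A3(iii) with constant $K<1$. Then for every $\alpha\in(0,-\log_\rho K)$, $$\rho^{\alpha n}\,\mathbb E\bigl(|\bm Z_n|^{-1}\bigr)\to 0\quad\text{as } n\to\infty.$$
   Context: Fix an integer $l\ge 2$, let $\mathbb N=\{0,1,2,\dots\}$, and for $\bm x\in\mathbb R^l$ let $|\bm x|=\sum_{i=1}^l|x_i|$. $(\bm Z_n)_{n\ge0}$ is an $l$-type Galton–Watson process started from a canonical basis vector, defined by $\bm Z_n=\sum_{j=1}^l\sum_{i=1}^{Z_{n-1,j}}\bm Y^{(j)}_{n-1,i}$ with mutually independent offspring vectors, $\bm Y^{(j)}_{n-1,i}$ having law $p_j$ on $\mathbb N^l$; $\bm Y^{(i)}$ denotes a random vector with law $p_i$. The mean matrix $M$ has entries $M_{ik}=\mathbb E(Y^{(i)}_k)$. Assumption A1: for every $j$, $p_j(\bm 0)=0$ and $\sum_{k=1}^l p_j(\bm e_k)<1$. Assumption A2: $M$ is positively regular and its largest eigenvalue $\rho$ satisfies $\rho>1$. Assumption A3(iii): there is a constant $K$ with $\mathbb E(|\bm Y^{(i)}|^{-1})\le K$ for all $i\in\{1,\dots,l\}$. *)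

(* Defs.v *)
From HB Require Import structures.
From mathcomp Require Import all_boot all_order all_algebra.
From mathcomp Require Import complex.
From mathcomp Require Import all_classical all_reals all_analysis.
Set Implicit Arguments. Unset Strict Implicit. Unset Printing Implicit Defensive.
Import Order.TTheory GRing.Theory Num.Theory.
Local Open Scope ring_scope.
Local Open Scope classical_set_scope.
Local Open Scope complex_scope.

Notation vecN l := {ffun 'I_l -> nat}.

Definition normN {l : nat} (x : vecN l) : nat := \sum_(k < l) x k.

Definition ebase {l : nat} (k : 'I_l) : vecN l := [ffun m => nat_of_bool (m == k)].

Definition zeroN {l : nat} : vecN l := [ffun _ => 0%N].

(* Index of an offspring vector Y^{(j)}_{n,i}: (n, j, i). *)
Notation offidx l := (nat * 'I_l * nat)%type.

(* Mutual independence of a family of discrete (N^l-valued) random vectors: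
   the product rule over every finite family of distinct indices and every
   choice of values (this is exactly mutual independence for discrete r.v.). *)
Definition mutually_independent {d} {T : measurableType d} {R : realType}
  (P : probability T R) {I : eqType} {V : Type} (X : I -> T -> V) : Prop :=
  forall (s : seq I) (v : I -> V), uniq s ->
    P (\bigcap_(k in [set k | k \in s]) [set w | X k w = v k]) =
    (\prod_(k <- s) P [set w | X k w = v k])%E.

Fixpoint GW {T : Type} {l : nat} (Y : offidx l -> T -> vecN l) (i0 : 'I_l)
  (n : nat) (w : T) : vecN l :=
  match n with
  | 0 => ebase i0
  | n'.+1 =>
      let z := GW Y i0 n' w in
      [ffun k => \sum_(j < l) \sum_(0 <= i < z j) Y (n', j, i) w k]
  end.

Definition ceigenvalue {R : realType} {l : nat} (M : 'M[R]_l) (z : R[i]) : Prop :=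
  eigenvalue (map_mx (fun x : R => x%:C) M) z.

(* rho is the largest eigenvalue of M (the spectral radius, which is an eigenvalue) *)
Definition largest_eigenvalue {R : realType} {l : nat} (M : 'M[R]_l) (rho : R) : Prop :=
  eigenvalue M rho /\ forall z : R[i], ceigenvalue M z -> `|z| <= `|rho%:C|.

Definition positively_regular {R : realType} {l : nat} (M : 'M[R]_l) : Prop :=
  exists m : nat, forall i k, 0 < (M ^+ m) i k.

(* Main.v *)
Require Import Defs.
From HB Require Import structures.
From mathcomp Require Import all_boot all_order all_algebra.
From mathcomp Require Import complex.
From mathcomp Require Import all_classical all_reals all_analysis.
From mathcomp Require Import measurable_realfun.
From mathcomp Require Import ring lra.
Import Order.TTheory GRing.Theory Num.Theory.
Local Open Scope ring_scope.
Local Open Scope classical_set_scope.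
Section amhm.
Variable R : realFieldType.

Lemma xy_ge2 (x y : R) : 0 < x -> 0 < y -> 2 <= x / y + y / x.
Proof.
move=> x0 y0.
have -> : x / y + y / x = 2 + (x - y) ^+ 2 / (x * y).
  by field; apply/andP; split; rewrite gt_eqF.
by rewrite lerDl divr_ge0 ?sqr_ge0 // mulr_ge0 // ltW.
Qed.

Lemma sum_ge_const (T : eqType) (r : seq T) (f : T -> R) (c : R) :
  (forall y, y \in r -> c <= f y) -> c * (size r)%:R <= \sum_(y <- r) f y.
Proof.
elim: r => [|y r IH] H; first by rewrite big_nil mulr0.
rewrite big_cons /= -addn1 natrD mulrDr mulr1 addrC lerD //.
  by apply: H; rewrite mem_head.
by apply: IH => z zr; apply: H; rewrite in_cons zr orbT.
Qed.

Lemma cs_sum (r : seq R) : all (fun x => 0 < x) r ->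
  ((size r)%:R) ^+ 2 <= (\sum_(x <- r) x) * (\sum_(x <- r) x^-1).
Proof.
elim: r => [|x r IH] /=; first by rewrite !big_nil mulr0 expr2 mulr0.
move=> /andP[x0 rpos]; have {}IH := IH rpos.
rewrite !big_cons.
set S := \sum_(x <- r) x; set H := \sum_(x <- r) x^-1; set k : R := (size r)%:R.
have e1 : x * x^-1 = 1 by rewrite mulfV // gt_eqF.
have e2 : 2 * k <= x * H + S * x^-1.
  have -> : x * H + S * x^-1 = \sum_(y <- r) (x / y + y / x).
    by rewrite big_split /= mulr_sumr mulr_suml.
  apply: sum_ge_const => y yr; apply: xy_ge2 => //.
  by move/allP: rpos => /(_ y yr).
have -> : (size r).+1%:R = k + 1 by rewrite -addn1 natrD.
have -> : (x + S) * (x^-1 + H) = x * x^-1 + (x * H + S * x^-1) + S * H by ring.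
rewrite e1 (_ : (k + 1) ^+ 2 = k ^+ 2 + 2 * k + 1); last by ring.
move: IH e2; rewrite -/S -/H -/k.
move: (k ^+ 2) (S * H) (2 * k) (x * H + S * x^-1) => a b c e; lra.
Qed.

Lemma amhm (xs : seq nat) :
  (((\sum_(x <- xs) x)%N)%:R)^-1 <=
  \sum_(x <- xs) (((size xs) ^ 2)%N%:R)^-1 *
     (if x == 0%N then ((size xs) ^ 2)%N%:R else (x%:R)^-1) :> R.
Proof.
set m2 := ((size xs) ^ 2)%N%:R.
have tge0 x : 0 <= m2^-1 * (if x == 0%N then m2 else (x%:R)^-1) :> R.
  by rewrite mulr_ge0 ?invr_ge0 ?ler0n //; case: ifP => _; rewrite ?invr_ge0 ler0n.
have [hz|hnz] := boolP (has (fun x => x == 0%N) xs).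
  move/hasP: hz => [x0 x0in /eqP x00].
  rewrite [X in _ <= X](big_rem _ x0in) /= x00 eqxx.
  have m2n0 : m2 != 0.
    by rewrite /m2 pnatr_eq0 expn_eq0 /=; case: (xs) x0in.
  rewrite mulVf // (@le_trans _ _ 1) //; last by rewrite lerDl sumr_ge0.
  case: (posnP (\sum_(x <- xs) x)%N) => [->|s0]; first by rewrite invr0.
  by rewrite invf_le1 ?ler1n ?ltr0n.
have {hnz} hnz : all (fun x => x != 0%N) xs by rewrite all_predC.
case: (posnP (size xs)) => [/size0nil ->|sz0]; first by rewrite !big_nil invr0.
have m2p : 0 < m2 by rewrite ltr0n expn_gt0 sz0.
have -> : \sum_(x <- xs) m2^-1 * (if x == 0%N then m2 else (x%:R)^-1) =
          m2^-1 * \sum_(x <- map (fun x => x%:R) xs) x^-1.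
  rewrite big_map mulr_sumr big_seq [RHS]big_seq; apply: eq_bigr => x xin.
  by move/allP: hnz => /(_ x xin) /negPf ->.
have rpos : all (fun x => 0 < x) (map (fun x => x%:R : R) xs).
  by rewrite all_map; apply/allP => x xin; rewrite /= ltr0n lt0n (allP hnz).
have := @cs_sum _ rpos; rewrite size_map big_map -natr_sum -natrX -/m2 => hcs.
set S := ((\sum_(x <- xs) x)%N)%:R : R in hcs *.
set H := \sum_(x <- map _ xs) x^-1 in hcs *.
have Sp : 0 < S.
  rewrite lt_neqAle ler0n andbT; apply/negP => /eqP S0.
  by move: hcs; rewrite -S0 mul0r; move/(lt_le_trans m2p); rewrite ltxx.
rewrite -[S^-1]mul1r -(mulVf (lt0r_neq0 m2p)) -mulrA.
apply: ler_wpM2l; first by rewrite invr_ge0 ltW.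
by rewrite ler_pdivrMr // mulrC.
Qed.
End amhm.
Section cser.
Context {R : realType}.
Local Open Scope ereal_scope.

Definition cser {V : countType} (b : V -> \bar R) : \bar R :=
  \sum_(k <oo) (match pickle_inv k with Some v => b v | None => 0 end).

Lemma cser_ge0 (V : countType) (b : V -> \bar R) : (forall v, 0 <= b v) -> 0 <= cser b.
Proof. move=> b0; apply: nneseries_ge0 => k _ _; case: pickle_inv => //. Qed.

Lemma le_cser (V : countType) (a b : V -> \bar R) :
  (forall v, 0 <= a v) -> (forall v, a v <= b v) -> cser a <= cser b.
Proof.
move=> a0 ab; apply: lee_nneseries => [k _ _|k _]; case: pickle_inv => //.
Qed.

Lemma cserZl (V : countType) (b : V -> \bar R) (x : R) : (forall v, 0 <= b v) ->
  cser (fun v => x%:E * b v) = x%:E * cser b.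
Proof.
move=> b0; rewrite /cser -nneseriesZl; last by move=> k _; case: pickle_inv.
by apply: eq_eseriesr => k _; case: pickle_inv => //; rewrite mule0.
Qed.

Lemma cser_esum (V : countType) (b : V -> \bar R) : (forall v, 0 <= b v) ->
  cser b = \esum_(v in setT) b v.
Proof.
move=> b0; rewrite /cser nneseries_esumT; last by move=> k; case: pickle_inv.
rewrite (esumID (range (@pickle V))); last by move=> k _; case: pickle_inv.
rewrite [X in _ + X]esum1 ?adde0; last first.
  move=> k [_ /= nk]; case E: pickle_inv => [v|//].
  by exfalso; apply: nk; exists v => //; rewrite -(@pickle_invK V k) E.
rewrite setTI (reindex_esum setT _ (@pickle V)).
  by apply: eq_esum => v _; rewrite pickleK_inv.
split; [by move=> v _; exists v| by move=> v w _ _ /(pcan_inj (@pickleK_inv V))|].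
by move=> k [v _ <-]; exists v.
Qed.

End cser.

Section meas.
Context d (T : measurableType d) {R : realType}.
Variable mu : {measure set T -> \bar R}.
Local Open Scope ereal_scope.

Lemma measure_cser (V : countType) (G : V -> set T) :
  (forall v, measurable (G v)) ->
  (forall v v' w, G v w -> G v' w -> v = v') ->
  mu (\bigcup_v G v) = cser (fun v => mu (G v)).
Proof.
move=> mG dG.
pose H k := match pickle_inv k with Some v => G v | None => set0 end.
have -> : \bigcup_v G v = \bigcup_(k in setT) H k.
  apply/seteqP; split => w /=.
    by move=> [v _ Gw]; exists (pickle v) => //; rewrite /H pickleK_inv.
  move=> [k _]; rewrite /H; case: pickle_inv => // v Gw; by exists v.
rewrite measure_bigcup.
- rewrite [LHS](_ : _ = \sum_(i <oo) mu (H i)); last first.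
    by apply: congr_lim; apply/funext => n; apply: eq_bigl => i; rewrite in_setT.
  rewrite /cser; apply: eq_eseriesr => k _; rewrite /H; case: pickle_inv => //.
- by move=> k _; rewrite /H; case: pickle_inv.
- move=> i j _ _ [w []]; rewrite /H.
  case Ei: pickle_inv => [v|//]; case Ej: pickle_inv => [v'|//] Gv Gv'.
  have vv := dG _ _ _ Gv Gv'; subst v'.
  by rewrite -(@pickle_invK V i) -(@pickle_invK V j) Ei Ej.
Qed.

Lemma integral_cser (V : countType) (W : T -> V) (D : set T) (f : T -> \bar R) :
  measurable D -> (forall v, measurable [set w | W w = v]) ->
  measurable_fun D f -> (forall x, D x -> 0 <= f x) ->
  \int[mu]_(x in D) f x = cser (fun v => \int[mu]_(x in D `&` [set w | W w = v]) f x).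
Proof.
move=> mD mW mf f0.
pose H k := match pickle_inv k with Some v => D `&` [set w | W w = v] | None => set0 end.
have DH : D = \bigcup_k H k.
  apply/seteqP; split => w /=.
    by move=> Dw; exists (pickle (W w)) => //; rewrite /H pickleK_inv.
  by move=> [k _]; rewrite /H; case: pickle_inv => // v [Dw _].
have mH : forall k, measurable (H k).
  by move=> kk; rewrite /H; case: pickle_inv => // ?; exact: measurableI.
rewrite [in LHS]DH ge0_integral_bigcup //; first last.
- move=> i j _ _ [w []]; rewrite /H.
  case Ei: pickle_inv => [v|//]; case Ej: pickle_inv => [v'|//] [_ /= Gv] [_ /= Gv'].
  by rewrite -(@pickle_invK V i) -(@pickle_invK V j) Ei Ej /= -Gv -Gv'.
- by rewrite -DH.
- by rewrite -DH.
rewrite /cser; apply: eq_eseriesr => k _; rewrite /H; case: pickle_inv => //.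
by rewrite integral_set0.
Qed.

Lemma dmeas_mfun (V : countType) (W : T -> V) (G : V -> \bar R) (D : set T) :
  (forall v, measurable [set w | W w = v]) -> measurable_fun D (fun w => G (W w)).
Proof.
move=> mW mD B mB.
have -> : (fun w => G (W w)) @^-1` B =
  \bigcup_v (if pselect (B (G v)) is left _ then [set w | W w = v] else set0).
  apply/seteqP; split => w /=.
    by move=> Bw; exists (W w) => //; case: pselect.
  by move=> [v _]; case: pselect => // Bv /= ->.
apply: measurableI => //; apply: countable_bigcupT_measurable.
  exact: countableP.
by move=> v; case: pselect.
Qed.

End meas.
Section GWsec.
Variables (R : realType) (l : nat) (d : measure_display) (T : measurableType d).
Variable (P : probability T R).
Variable (Y : offidx l -> T -> vecN l).
Hypothesis Ymeas : forall (a : offidx l) (y : vecN l), measurable [set w | Y a w = y].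
Hypothesis Yindep : mutually_independent P Y.
Variable i0 : 'I_l.
Local Open Scope ereal_scope.

Definition cyl (s : seq (offidx l)) (vs : seq (vecN l)) : set T :=
  [set w | map (fun a => Y a w) s = vs].

Lemma cyl_cons a s v vs : cyl (a :: s) (v :: vs) = [set w | Y a w = v] `&` cyl s vs.
Proof. by apply/seteqP; split => w; rewrite /cyl /=; [case => -> ->| case => -> ->]. Qed.

Lemma cyl_meas s vs : measurable (cyl s vs).
Proof.
elim: s vs => [|a s IH] [|v vs].
- by have -> : cyl [::] [::] = setT by apply/seteqP; split.
- by have -> : cyl [::] (v :: vs) = set0 by apply/seteqP; split.
- by have -> : cyl (a :: s) [::] = set0 by apply/seteqP; split.
- by rewrite cyl_cons; apply: measurableI.
Qed.

Lemma cyl_cat s1 s2 vs1 vs2 : size vs1 = size s1 ->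
  cyl (s1 ++ s2) (vs1 ++ vs2) = cyl s1 vs1 `&` cyl s2 vs2.
Proof.
move=> sz; apply/seteqP; split => w /=; rewrite /cyl /= map_cat.
  by move/eqP; rewrite eqseq_cat ?size_map // => /andP[/eqP -> /eqP ->].
by case=> -> ->.
Qed.

Lemma zip_map_self (A B : Type) (s : seq A) (f : A -> B) :
  zip s (map f s) = map (fun x => (x, f x)) s.
Proof. by elim: s => //= x s ->. Qed.

Lemma Pcyl s vs : uniq s -> size vs = size s ->
  P (cyl s vs) = \prod_(x <- zip s vs) P [set w | Y x.1 w = x.2].
Proof.
move=> us svs; pose v k := nth zeroN vs (index k s).
have mv : map v s = vs.
  apply: (@eq_from_nth _ zeroN); rewrite size_map // => i ilt.
  by rewrite (nth_map (0%N, i0, 0%N)) // /v index_uniq.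
have := Yindep s v us.
have -> : \bigcap_(k in [set k | k \in s]) [set w | Y k w = v k] = cyl s vs.
  apply/seteqP; split => w /=.
    by move=> H; rewrite /cyl /= -mv; apply/eq_in_map => k ks; exact: (H k ks).
  by rewrite /cyl /= -mv => /eq_in_map H k ks; exact: H.
by move=> ->; rewrite -mv zip_map_self big_map.
Qed.

Lemma Pcyl_cat s1 s2 vs1 vs2 : uniq (s1 ++ s2) -> size vs1 = size s1 ->
  size vs2 = size s2 ->
  P (cyl (s1 ++ s2) (vs1 ++ vs2)) = P (cyl s1 vs1) * P (cyl s2 vs2).
Proof.
move=> u sz1 sz2; move: (u); rewrite cat_uniq => /and3P[u1 _ u2].
by rewrite !Pcyl ?size_cat ?sz1 ?sz2 // zip_cat // big_cat.
Qed.

Definition Fn (n : nat) (z : vecN l) : seq (offidx l) :=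
  [seq (n, j, i) | j <- index_enum 'I_l, i <- index_iota 0 (z j)].

Definition sumv (vs : seq (vecN l)) : vecN l := [ffun k => (\sum_(v <- vs) v k)%N].

Lemma GWS n w : GW Y i0 n.+1 w = sumv (map (fun a => Y a w) (Fn n (GW Y i0 n w))).
Proof.
apply/ffunP => k; rewrite /= !ffunE big_map /Fn big_allpairs_dep /=.
by [].
Qed.

Lemma Fn_uniq n z : uniq (Fn n z).
Proof.
apply: allpairs_uniq_dep; first exact: index_enum_uniq.
  by move=> j _; exact: iota_uniq.
by move=> [j i] [j' i'] _ _ /= [e1 e2]; subst.
Qed.

Lemma Fn_gen n z a : a \in Fn n z -> a.1.1 = n.
Proof. by move=> /allpairsPdep[j [i [_ _ ->]]]. Qed.

Lemma size_Fn n z : size (Fn n z) = normN z.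
Proof.
rewrite /Fn size_allpairs_dep sumnE big_map /normN.
by apply: eq_bigr => j _; rewrite size_iota subn0.
Qed.


Definition Zs n z : set T := [set w | GW Y i0 n w = z].

Definition Gd n z C cs (p : vecN l * seq (vecN l)) : set T :=
  if (sumv p.2 == z) && (size p.2 == size (Fn n p.1))
  then Zs n p.1 `&` cyl (Fn n p.1 ++ C) (p.2 ++ cs) else set0.

Lemma Gd_cover n z C cs : size cs = size C ->
  Zs n.+1 z `&` cyl C cs = \bigcup_p Gd n z C cs p.
Proof.
move=> sz; apply/seteqP; split => w /=.
- move=> [Zw Cw]; exists (GW Y i0 n w, map (fun a => Y a w) (Fn n (GW Y i0 n w))) => //.
  have {}Zw : sumv (map (fun a => Y a w) (Fn n (GW Y i0 n w))) = z.
    by rewrite -GWS; exact: Zw.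
  rewrite /Gd /= Zw eqxx size_map eqxx /=; split => //.
  by rewrite cyl_cat ?size_map.
- move=> [[z' vs] _]; rewrite /Gd /=; case: ifPn => // /andP[/eqP sv /eqP svs].
  rewrite cyl_cat // => -[Zw [Fw Cw]]; split => //.
  have Zw' : GW Y i0 n w = z' by exact: Zw.
  have Fw' : map (fun a => Y a w) (Fn n z') = vs by exact: Fw.
  by change (GW Y i0 n.+1 w = z); rewrite GWS Zw' Fw'.
Qed.

Lemma Gd_disj n z C cs p p' w : Gd n z C cs p w -> Gd n z C cs p' w -> p = p'.
Proof.
case: p p' => [z1 vs1] [z2 vs2]; rewrite /Gd /=.
case: ifPn => // /andP[_ /eqP s1]; case: ifPn => // /andP[_ /eqP s2].
rewrite !cyl_cat // => -[Z1 [F1 _]] [Z2 [F2 _]].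
move: Z1 Z2; rewrite /Zs /= => Z1 Z2.
have e : z1 = z2 by rewrite -Z1 -Z2.
congr pair => //.
have F1' : map (fun a => Y a w) (Fn n z1) = vs1 by exact: F1.
have F2' : map (fun a => Y a w) (Fn n z2) = vs2 by exact: F2.
by rewrite -F1' -F2' e.
Qed.

Definition Q n z (p : vecN l * seq (vecN l)) : \bar R :=
  if (sumv p.2 == z) && (size p.2 == size (Fn n p.1))
  then P (Zs n p.1) * P (cyl (Fn n p.1) p.2) else 0.

Lemma Q_ge0 n z p : 0 <= Q n z p.
Proof. by rewrite /Q; case: ifPn => // _; apply: mule_ge0. Qed.

Lemma decomp n z C cs : (forall z, measurable (Zs n z)) ->
  (forall z C cs, uniq C -> all (fun a => (n <= a.1.1)%N) C -> size cs = size C ->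
     P (Zs n z `&` cyl C cs) = P (Zs n z) * P (cyl C cs)) ->
  uniq C -> all (fun a => (n.+1 <= a.1.1)%N) C -> size cs = size C ->
  P (Zs n.+1 z `&` cyl C cs) = cser (Q n z) * P (cyl C cs).
Proof.
move=> mZ iZ uC gC sz.
have mG p : measurable (Gd n z C cs p).
  rewrite /Gd; case: ifPn => _; last exact: measurable0.
  by apply: measurableI; [exact: mZ | exact: cyl_meas].
rewrite Gd_cover // measure_cser //; last exact: Gd_disj.
have fc : P (cyl C cs) \is a fin_num by apply: fin_num_measure; exact: cyl_meas.
rewrite -(fineK fc) muleC -cserZl; last exact: Q_ge0.
congr cser; apply/funext => -[z' vs]; rewrite /Gd /Q /=.
case: ifPn => [/andP[_ /eqP svs]|_]; last by rewrite measure0 mule0.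
have uFC : uniq (Fn n z' ++ C).
  rewrite cat_uniq Fn_uniq uC andbT /=; apply/hasPn => a aC; apply/negP => aF.
  have := @Fn_gen n z' a aF; move/allP: gC => /(_ a aC) h e.
  by rewrite e ltnn in h.
rewrite fineK // iZ //.
- by rewrite Pcyl_cat // muleA muleC.
- rewrite all_cat; apply/andP; split; apply/allP => a aX.
    by rewrite (@Fn_gen n z' a aX).
  by move/allP: gC => /(_ a aX) /ltnW.
- by rewrite !size_cat svs sz.
Qed.


Lemma inv n : (forall z, measurable (Zs n z)) /\
  (forall z C cs, uniq C -> all (fun a => (n <= a.1.1)%N) C -> size cs = size C ->
     P (Zs n z `&` cyl C cs) = P (Zs n z) * P (cyl C cs)).
Proof.
elim: n => [|n [mZ iZ]].
  have Z0 z : Zs 0 z = if ebase i0 == z then setT else set0.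
    by apply/seteqP; split => w; rewrite /Zs /=; case: eqP.
  split => [z|z C cs _ _ _]; rewrite Z0; case: ifPn => _.
  - exact: measurableT.
  - exact: measurable0.
  - by rewrite setTI probability_setT mul1e.
  - by rewrite set0I measure0 mul0e.
have cyl0 : cyl [::] [::] = setT by apply/seteqP; split.
have PZ z : P (Zs n.+1 z) = cser (Q n z).
  have := @decomp n z [::] [::] mZ iZ isT isT erefl.
  by rewrite cyl0 setIT probability_setT mule1.
split.
- move=> z; rewrite -[Zs n.+1 z]setIT -cyl0 Gd_cover //.
  apply: countable_bigcupT_measurable; first exact: countableP.
  move=> p; rewrite /Gd; case: ifPn => _; last exact: measurable0.
  by apply: measurableI; [exact: mZ | exact: cyl_meas].
- by move=> z C cs uC gC sz; rewrite decomp // PZ.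
Qed.


Definition gz (z : vecN l) : R := (((normN z)%:R)^-1)%R.
Definition En n := \int[P]_w (gz (GW Y i0 n w))%:E.

Lemma normN_sumv vs : normN (sumv vs) = (\sum_(v <- vs) normN v)%N.
Proof.
rewrite /normN /sumv (eq_bigr (fun k => \sum_(v <- vs) v k)%N); last first.
  by move=> k _; rewrite ffunE.
exact: exchange_big.
Qed.

Lemma gz_ge0 z : (0 <= gz z)%R.
Proof. by rewrite /gz invr_ge0 ler0n. Qed.

Lemma En_cser n : En n = cser (fun z => (gz z)%:E * P (Zs n z)).
Proof.
rewrite /En (@integral_cser _ _ _ P _ (GW Y i0 n) setT); last 4 first.
- exact: measurableT.
- exact: (inv n).1.
- exact: (@dmeas_mfun _ _ _ _ _ (fun z => (gz z)%:E) _ (inv n).1).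
- by move=> w _; rewrite lee_fin gz_ge0.
congr cser; apply/funext => z; rewrite setTI.
rewrite (eq_integral (cst (gz z)%:E)); last first.
  by move=> w; rewrite inE /= => ->.
by rewrite integral_cst //; exact: (inv n).1.
Qed.

Definition hz (m : nat) (y : vecN l) : R :=
  (if normN y == 0%N then ((m ^ 2)%N)%:R else ((normN y)%:R)^-1)%R.

Lemma hz_ge0 m y : (0 <= hz m y)%R.
Proof. by rewrite /hz; case: ifP => _; rewrite ?invr_ge0 ler0n. Qed.

Lemma normN0 (y : vecN l) : normN y = 0%N -> y = zeroN.
Proof.
move=> /eqP; rewrite /normN sum_nat_eq0 => /forallP H.
by apply/ffunP => k; rewrite ffunE; apply/eqP; have := H k; rewrite implyTb.
Qed.

Lemma En_step n (p : 'I_l -> vecN l -> R)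
  (Ylaw : forall (n : nat) (j : 'I_l) (i : nat) (y : vecN l),
      P [set w | Y (n, j, i) w = y] = (p j y)%:E)
  (A1a : forall j, p j zeroN = 0%R) (K : R)
  (A3 : forall i,
      (\esum_(y in [set: vecN l]) ((p i y) * ((normN y)%:R)^-1)%:E <= K%:E)%E) :
  En n.+1 <= K%:E * En n.
Proof.
have p0 j y : (0 <= p j y)%R by rewrite -lee_fin -(Ylaw 0%N j 0%N y) measure_ge0.
have mZ := (inv n).1; have iZ := (inv n).2.
rewrite (En_cser n) -cserZl; last by move=> z; rewrite mule_ge0 // lee_fin gz_ge0.
rewrite /En (@integral_cser _ _ _ P _ (GW Y i0 n) setT); last 4 first.
- exact: measurableT.
- exact: (inv n).1.
- exact: (@dmeas_mfun _ _ _ _ (GW Y i0 n.+1) (fun z => (gz z)%:E) setT (inv n.+1).1).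
- by move=> w _; rewrite lee_fin gz_ge0.
apply: le_cser => [z|z]; first by apply: integral_ge0 => w _; rewrite lee_fin gz_ge0.
rewrite setTI.
set s := Fn n z; set m := normN z; set c : R := ((((m ^ 2)%N)%:R)^-1)%R.
have fZ : P (Zs n z) \is a fin_num by apply: fin_num_measure; exact: mZ.
set fPZ := fine (P (Zs n z)).
have PZE : P (Zs n z) = fPZ%:E by rewrite /fPZ fineK.
apply: (@le_trans _ _ (\int[P]_(w in Zs n z) (\sum_(a <- s) (c * hz m (Y a w))%:E)%E)).
  apply: ge0_le_integral; first exact: mZ.
  - by move=> w _; rewrite lee_fin gz_ge0.
  - exact: (@dmeas_mfun _ _ _ _ (GW Y i0 n.+1) (fun z => (gz z)%:E) _ (inv n.+1).1).
  - apply: emeasurable_sum => a.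
    exact: (@dmeas_mfun _ _ _ _ (Y a) (fun y => (c * hz m y)%:E) _ (Ymeas a)).
  - move=> w Zw; rewrite sumEFin lee_fin.
    have Zw' : GW Y i0 n w = z by exact: Zw.
    rewrite /gz GWS Zw' normN_sumv -/s.
    have sz : size s = m by rewrite /s size_Fn.
    have := amhm R (map normN (map (fun a => Y a w) s)).
    rewrite !size_map sz !big_map /c /hz.
    by move=> H; apply: (le_trans H).
rewrite ge0_integral_sum //; first last.
- by move=> a w _; rewrite lee_fin mulr_ge0 ?hz_ge0 // invr_ge0 ler0n.
- move=> a.
  exact: (@dmeas_mfun _ _ _ _ (Y a) (fun y => (c * hz m y)%:E) _ (Ymeas a)).
have c0 : (0 <= c)%R by rewrite /c invr_ge0 ler0n.
have fPZ0 : (0 <= fPZ)%R by rewrite -lee_fin -PZE measure_ge0.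
have Ta a : a \in s ->
    \int[P]_(w in Zs n z) (c * hz m (Y a w))%:E <= (c * fPZ * K)%:E.
  case: a => [[a1 j] i] ain.
  have gen : (n <= a1)%N by have /= -> := @Fn_gen n z _ ain.
  have cylE y : cyl [:: (a1, j, i)] [:: y] = [set w | Y (a1, j, i) w = y].
    by apply/seteqP; split => w; rewrite /cyl /=; [case|move=> ->].
  rewrite (@integral_cser _ _ _ P _ (Y (a1, j, i)) (Zs n z)); last 4 first.
  - exact: mZ.
  - exact: Ymeas.
  - exact: (@dmeas_mfun _ _ _ _ (Y (a1, j, i)) (fun y => (c * hz m y)%:E) _ (Ymeas _)).
  - by move=> w _; rewrite lee_fin mulr_ge0 ?hz_ge0.
  rewrite (_ : (fun y => _) = fun y => (c * fPZ)%:E * (p j y * hz m y)%:E); last first.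
    apply/funext => y.
    rewrite (eq_integral (cst (c * hz m y)%:E)); last first.
      by move=> w; rewrite inE => -[_ /= ->].
    rewrite integral_cst; last by apply: measurableI; [exact: mZ|exact: Ymeas].
    have := iZ z [:: (a1, j, i)] [:: y] isT; rewrite /= andbT => /(_ gen erefl).
    rewrite -cylE => ->.
    rewrite cylE Ylaw PZE -!EFinM.
    by congr (_%:E); ring.
  rewrite cserZl; last by move=> y; rewrite lee_fin mulr_ge0 ?hz_ge0.
  rewrite [X in _ <= X]EFinM; apply: lee_wpmul2l; first by rewrite lee_fin mulr_ge0.
  rewrite cser_esum; last by move=> y; rewrite lee_fin mulr_ge0 ?hz_ge0.
  apply: le_trans (A3 j); rewrite le_eqVlt; apply/orP; left; apply/eqP.
  apply: eq_esum => y _; congr (_%:E); rewrite /hz.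
  case: ifP => [/eqP y0|//].
  by rewrite (@normN0 y y0) A1a !mul0r.
rewrite big_seq.
apply: (@le_trans _ _ (\sum_(a <- s | a \in s) (c * fPZ * K)%:E)).
  by apply: lee_sum => a ain; exact: Ta.
rewrite -big_seq sumEFin big_const_seq count_predT iter_addr_0 PZE -!EFinM lee_fin.
have sz : size s = m by rewrite /s size_Fn.
have cm : (c * m%:R = gz z)%R.
  rewrite /c /gz -/m; case: (posnP m) => [->|m0]; first by rewrite mulr0 invr0.
  rewrite natrX expr2 invfM -mulrA mulVf ?mulr1 //.
  by rewrite pnatr_eq0 -lt0n.
by rewrite sz -mulr_natr -cm le_eqVlt; apply/orP; left; apply/eqP; ring.
Qed.


Lemma En0 : En 0 = 1.
Proof.
have n1 : normN (@ebase l i0) = 1%N.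
  rewrite /normN (bigD1 i0) //= ffunE eqxx big1 // => k kn.
  by rewrite ffunE (negbTE kn).
rewrite /En (eq_integral (cst 1%:E)); last first.
  by move=> w _; rewrite /= /gz n1 invr1.
by rewrite integral_cst // mul1e; exact: probability_setT.
Qed.

Lemma En_ge0 n : 0 <= En n.
Proof. by apply: integral_ge0 => w _; rewrite lee_fin gz_ge0. Qed.

End GWsec.

Theorem lemma3p2 (R : realType) (l : nat) (hl : (2 <= l)%N)
  (d : measure_display) (T : measurableType d) (P : probability T R)
  (p : 'I_l -> vecN l -> R)
  (Y : offidx l -> T -> vecN l)
  (* each offspring vector is a (discrete) random vector *)
  (Ymeas : forall (a : offidx l) (y : vecN l), measurable [set w | Y a w = y])
  (* Y^{(j)}_{n,i} has law p_j *)
  (Ylaw : forall (n : nat) (j : 'I_l) (i : nat) (y : vecN l),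
      P [set w | Y (n, j, i) w = y] = (p j y)%:E)
  (* the offspring vectors are mutually independent *)
  (Yindep : mutually_independent P Y)
  (i0 : 'I_l)
  (* A1 *)
  (A1a : forall j, p j zeroN = 0)
  (A1b : forall j, \sum_(k < l) p j (ebase k) < 1)
  (* mean matrix M_{ik} = E(Y^{(i)}_k) *)
  (M : 'M[R]_l)
  (HM : forall i k,
      (\esum_(y in [set: vecN l]) ((p i y) * (y k)%:R)%:E)%E = (M i k)%:E)
  (* A2 *)
  (rho : R)
  (A2a : positively_regular M)
  (A2b : largest_eigenvalue M rho)
  (A2c : 1 < rho)
  (* A3(iii) with K < 1 *)
  (K : R)
  (A3 : forall i,
      (\esum_(y in [set: vecN l]) ((p i y) * ((normN y)%:R)^-1)%:E <= K%:E)%E)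
  (HK : K < 1)
  (alpha : R) (Halpha0 : 0 < alpha) (Halpha1 : alpha < - (ln K / ln rho)) :
  (fun n : nat =>
     ((rho `^ (alpha * n%:R))%:E *
      'E_P[fun w => (((normN (GW Y i0 n w))%:R)^-1)%R])%E)
    @ \oo --> 0%:E.
Proof.
have p0 j y : 0 <= p j y by rewrite -lee_fin -(Ylaw 0%N j 0%N y) measure_ge0.
have K0 : 0 <= K.
  rewrite -lee_fin; apply: le_trans (A3 i0); apply: esum_ge0 => y _.
  by rewrite lee_fin mulr_ge0 // invr_ge0 ler0n.
pose E n := @En R l d T P Y i0 n.
have EE n : ('E_P[fun w => (((normN (GW Y i0 n w))%:R)^-1)%R])%E = E n.
  by rewrite unlock.
have Ele n : (E n <= (K ^+ n)%:E)%E.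
  elim: n => [|n IH]; first by rewrite /E En0 expr0.
  apply: le_trans (@En_step R l d T P Y Ymeas Yindep i0 n p Ylaw A1a K A3) _.
  by rewrite exprS EFinM; apply: lee_wpmul2l; rewrite ?lee_fin.
have Efin n : E n \is a fin_num.
  rewrite ge0_fin_numE; last exact: En_ge0.
  by apply: le_lt_trans (Ele n) _; rewrite ltry.
pose e n := fine (E n).
have eE n : E n = (e n)%:E by rewrite /e fineK.
have e0 n : 0 <= e n by rewrite -lee_fin -eE En_ge0.
have eK n : e n <= K ^+ n by rewrite -lee_fin -eE.
pose u n := rho `^ (alpha * n%:R) * e n.
have -> : (fun n : nat => ((rho `^ (alpha * n%:R))%:E *
      'E_P[fun w => (((normN (GW Y i0 n w))%:R)^-1)%R])%E) = fun n => (u n)%:E.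
  by apply/funext => n; rewrite EE eE -EFinM.
set q := rho `^ alpha * K.
have q0 : 0 <= q by rewrite mulr_ge0 // powR_ge0.
have q1 : q < 1.
  case: (eqVneq K 0) => [K00|Kn0]; first by rewrite /q K00 mulr0 ltr01.
  have Kp : 0 < K by rewrite lt_neqAle eq_sym Kn0 K0.
  have lr : 0 < ln rho by apply: ln_gt0.
  have rp : 0 < rho by apply: lt_trans A2c.
  have qp : 0 < q by rewrite mulr_gt0 // powR_gt0.
  have -> : q = expR (ln q) by rewrite lnK // posrE.
  rewrite -expR0 ltr_expR /q lnM ?posrE ?powR_gt0 // ln_powR.
  move: Halpha1; rewrite -mulNr ltr_pdivlMr //.
  move: (alpha * ln rho) (ln K) => a b; lra.
have un n : 0 <= u n <= q ^+ n.
  rewrite /u mulr_ge0 ?powR_ge0 //= powRrM powR_mulrn ?powR_ge0 // /q exprMn.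
  by rewrite ler_pM // ?exprn_ge0 ?powR_ge0.
apply: cvg_EFin; first exact: nearW.
have -> : fine \o (fun n => (u n)%:E) = u by [].
have hq : (GRing.exp q : R ^nat) @ \oo --> 0.
  by apply: cvg_expr; rewrite ger0_norm.
refine (@squeeze_cvgr _ _ _ _ (fun _ => 0) (fun n => q ^+ n) u _ 0 _ hq).
- by apply: filterE => n; exact: un.
- apply/cvgrPdist_lt => ep ep0; apply: filterE => n; by rewrite subrr normr0.
Qed.
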